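(* Let $p_{Z|XY}$ be a randomized function (not necessarily in normal form). (1) If the characteristic bipartite graph of $p_{XY}$ is connected, then every secure protocol $\Pi(p_{XY},p_{Z|XY})$ satisfies $I(X,Y,Z;M_{12})=0$. (2) If $p_{XY}$ has full support and there is no partition $\mathcal X=\mathcal X_1\cup\mathcal X_2$ into disjoint nonempty sets such that the sets $\mathcal Z_k=\{z:\exists x\in\mathcal X_k,y\in\mathcal Y,\ p(z|x,y)>0\}$, $k=1,2$, are disjoint, then every secure protocol $\Pi(p_{XY},p_{Z|XY})$ satisfies $I(X,Y,Z;M_{31})=0$. (3) If $p_{XY}$ has full support and there is no partition $\mathcal Y=\mathcal Y_1\cup\mathcal Y_2$ into disjoint nonempty sets such that the sets $\mathcal Z_k=\{z:\exists x\in\mathcal X,y\in\mathcal Y_k,\ p(z|x,y)>0\}$, $k=1,2$, are disjoint, then every secure protocol $\Pi(p_{XY},p_{Z|XY})$ satisfies $I(X,Y,Z;M_{23})=0$.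
   Context: Setting: $\mathcal X,\mathcal Y,\mathcal Z$ finite sets; Alice (party 1) holds $X\in\mathcal X$, Bob (party 2) holds $Y\in\mathcal Y$, $(X,Y)\sim p_{XY}$; Charlie (party 3) has no input and outputs $Z\in\mathcal Z$; a randomized function is a conditional distribution $p_{Z|XY}$. In a protocol the parties, each with private randomness, exchange messages over multiple rounds on three pairwise private links, each message a codeword of a prefix-free code determined by previous messages on that link; the protocol terminates with probability 1 and may depend on $p_{XY}$. $M_{12},M_{23},M_{31}$ are the final transcripts on the Alice–Bob, Bob–Charlie, Charlie–Alice links. A secure protocol $\Pi(p_{XY},p_{Z|XY})$ satisfies correctness (on inputs $x,y$ Charlie's output has distribution $p_{Z|X=x,Y=y}$) and privacy (Markov chains $(M_{12},M_{31})-X-(Y,Z)$, $(M_{12},M_{23})-Y-(X,Z)$, $(M_{23},M_{31})-Z-(X,Y)$). The characteristic bipartite graph of $p_{XY}$ has vertex set $\mathcal X\cup\mathcal Y$ with $x,y$ adjacent iff $p_{XY}(x,y)>0$. *)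

(* Defs.v *)
From HB Require Import structures.
From mathcomp Require Import all_boot all_order all_algebra.
From mathcomp Require Import all_classical all_reals all_analysis.
Set Implicit Arguments. Unset Strict Implicit. Unset Printing Implicit Defensive.
Import Order.TTheory GRing.Theory Num.Theory.
Local Open Scope classical_set_scope.
Local Open Scope ring_scope.

(* Transcripts on a link: finite bit strings (concatenation of the codewords
   exchanged on that link). *)
Definition transcript := seq bool.

Section Defs.
Context {R : realType} {d : measure_display} {Omega : measurableType d}.
Variable P : probability Omega R.

Definition ev {T : Type} (A : Omega -> T) (a : T) : set Omega := A @^-1` [set a].

Definition discrete_rv {T : Type} (A : Omega -> T) : Prop :=
  forall a, measurable (ev A a).

Definition markov_chain {TA TB TC : Type}
  (A : Omega -> TA) (B : Omega -> TB) (C : Omega -> TC) : Prop :=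
  forall a b c,
    (P (ev A a `&` ev B b `&` ev C c) * P (ev B b) =
     P (ev A a `&` ev B b) * P (ev B b `&` ev C c))%E.

(* Mutual information I(A;B) of discrete random variables (in nats):
     I(A;B) = sum_{a,b} p(a,b) ln (p(a,b) / (p(a) p(b)))
   written with the summand  p ln(p/q) - p + q  (p = p(a,b), q = p(a)p(b)),
   which has the same (possibly infinite) sum since the added terms sum to
   1 - 1 = 0, but is termwise nonnegative, so the sum over the countable
   alphabet is always well defined. Convention 0 ln 0 = 0 (ln 0 = 0 and
   x/0 = 0 in MathComp). *)
Definition mi_term {TA TB : Type} (A : Omega -> TA) (B : Omega -> TB)
  (ab : TA * TB) : \bar R :=
  let r := fine (P (ev A ab.1 `&` ev B ab.2)) in
  let q := fine (P (ev A ab.1)) * fine (P (ev B ab.2)) in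
  (r * ln (r / q) - r + q)%:E.

Definition mutual_info {TA TB : choiceType} (A : Omega -> TA) (B : Omega -> TB)
  : \bar R := \esum_(ab in [set: TA * TB]) mi_term A B ab.

End Defs.

Local Close Scope classical_set_scope.
Section Setting.
Context {R : realType} {X Y Z : finType}.

Definition is_pmf2 (pXY : X -> Y -> R) : Prop :=
  (forall x y, 0 <= pXY x y) /\ \sum_(x : X) \sum_(y : Y) pXY x y = 1.

Definition is_cond_pmf (pZ : X -> Y -> Z -> R) : Prop :=
  forall x y, (forall z, 0 <= pZ x y z) /\ \sum_(z : Z) pZ x y z = 1.

Definition full_support (pXY : X -> Y -> R) : Prop := forall x y, 0 < pXY x y.

Definition char_graph (pXY : X -> Y -> R) : rel (X + Y) :=
  fun u v => match u, v with
             | inl x, inr y => 0 < pXY x y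
             | inr y, inl x => 0 < pXY x y
             | _, _ => false
             end.

Definition char_graph_connected (pXY : X -> Y -> R) : Prop :=
  forall u v : X + Y, connect (char_graph pXY) u v.

Definition Zset_of_X (pZ : X -> Y -> Z -> R) (Xk : {set X}) : {set Z} :=
  [set z | [exists x in Xk, exists y : Y, 0 < pZ x y z]].
Definition Zset_of_Y (pZ : X -> Y -> Z -> R) (Yk : {set Y}) : {set Z} :=
  [set z | [exists x : X, exists y in Yk, 0 < pZ x y z]].

Definition X_partition_exists (pZ : X -> Y -> Z -> R) : Prop :=
  exists X1 X2 : {set X}, [/\ X1 :|: X2 = finset.setT, [disjoint X1 & X2],
    X1 != finset.set0, X2 != finset.set0 & [disjoint Zset_of_X pZ X1 & Zset_of_X pZ X2]].
Definition Y_partition_exists (pZ : X -> Y -> Z -> R) : Prop :=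
  exists Y1 Y2 : {set Y}, [/\ Y1 :|: Y2 = finset.setT, [disjoint Y1 & Y2],
    Y1 != finset.set0, Y2 != finset.set0 & [disjoint Zset_of_Y pZ Y1 & Zset_of_Y pZ Y2]].

Local Open Scope classical_set_scope.
(* The joint behaviour of a secure protocol Pi(p_XY, p_Z|XY): on a
   probability space, inputs Xv, Yv, Charlie's output Zv and the final
   transcripts M12, M23, M31 such that (X,Y) ~ p_XY, correctness and
   privacy hold. *)
Definition secure_execution {d : measure_display} {Omega : measurableType d}
  (P : probability Omega R) (pXY : X -> Y -> R) (pZ : X -> Y -> Z -> R)
  (Xv : Omega -> X) (Yv : Omega -> Y) (Zv : Omega -> Z)
  (M12 M23 M31 : Omega -> transcript) : Prop :=
  [/\ [/\ discrete_rv Xv, discrete_rv Yv & discrete_rv Zv],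
      [/\ discrete_rv M12, discrete_rv M23 & discrete_rv M31],
      (forall x y, P (ev Xv x `&` ev Yv y) = (pXY x y)%:E),
      (forall x y z, P (ev Xv x `&` ev Yv y `&` ev Zv z) = (pXY x y * pZ x y z)%:E) &
      (* privacy against Alice, Bob, Charlie *)
      [/\ markov_chain P (fun w => (M12 w, M31 w)) Xv (fun w => (Yv w, Zv w)),
          markov_chain P (fun w => (M12 w, M23 w)) Yv (fun w => (Xv w, Zv w)) &
          markov_chain P (fun w => (M23 w, M31 w)) Zv (fun w => (Xv w, Yv w))]].

End Setting.

(* Main.v *)
Require Import Defs.
From HB Require Import structures.
From mathcomp Require Import all_boot all_order all_algebra.
From mathcomp Require Import all_classical all_reals all_analysis.
Import Order.TTheory GRing.Theory Num.Theory.
Local Open Scope classical_set_scope.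
Local Open Scope ring_scope.

Ltac setI_tac := apply/seteqP; split => w /=; tauto.

Section Helpers.
Context {R : realType} {d : measure_display} {Omega : measurableType d}.
Variable P : probability Omega R.

Lemma ev_pair {TA TB : Type} (A : Omega -> TA) (B : Omega -> TB) a b :
  ev (fun w => (A w, B w)) (a, b) = ev A a `&` ev B b.
Proof.
apply/seteqP; split => w; rewrite /ev /preimage /=.
  by case=> -> ->.
by case=> -> ->.
Qed.

Definition Fn {T : countType} (V : Omega -> T) (n : nat) : set Omega :=
  [set w | pickle (V w) = n].

Lemma FnE {T : countType} (V : Omega -> T) n :
  Fn V n = match pickle_inv n with Some x => ev V x | None => set0 end.
Proof.
case E: (pickle_inv n) => [x|].
  apply/seteqP; split => w; rewrite /Fn /ev /preimage /=.
    by move=> H; move: E; rewrite -H pickleK_inv; case.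
  by move=> ->; have := @pickle_invK T n; rewrite E.
apply/seteqP; split => w; rewrite /Fn /=; last by [].
by move=> H; move: E; rewrite -H pickleK_inv.
Qed.

Lemma Fn_meas {T : countType} (V : Omega -> T) n :
  discrete_rv V -> measurable (Fn V n).
Proof. by move=> dV; rewrite FnE; case: pickle_inv. Qed.

Lemma decomp {T : countType} (V : Omega -> T) E :
  discrete_rv V -> measurable E ->
  P E = (\sum_(n <oo) P (E `&` Fn V n))%E.
Proof.
move=> dV mE.
have EE : E = \bigcup_(n in setT) (E `&` Fn V n).
  apply/seteqP; split => w.
    by move=> Ew; exists (pickle (V w)) => //.
  by case=> n _ [].
rewrite {1}EE measure_bigcup //.
- by apply: eq_eseriesl => n; rewrite in_setT.
- by move=> n _; apply: measurableI => //; exact: Fn_meas.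
- move=> i j _ _ [w [[_ Fi] [_ Fj]]].
  by rewrite /Fn /= in Fi Fj; rewrite -Fi -Fj.
Qed.

Lemma PfinE (E : set Omega) : measurable E -> P E = (fine (P E))%:E.
Proof. by move=> mE; rewrite fineK // fin_num_measure. Qed.

Lemma marg {TA TB TC : Type} {T : countType} (A : Omega -> TA) (A' : Omega -> T)
  (B : Omega -> TB) (C : Omega -> TC) :
  discrete_rv A -> discrete_rv A' -> discrete_rv B -> discrete_rv C ->
  (forall a a' b c, (P (ev A a `&` ev B b `&` ev C c `&` ev A' a') * P (ev B b) =
     P (ev A a `&` ev B b `&` ev A' a') * P (ev B b `&` ev C c))%E) ->
  markov_chain P A B C.
Proof.
move=> dA dA' dB dC H a b c.
have mb := dB b.
have mbc : measurable (ev B b `&` ev C c) by apply: measurableI.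
rewrite (decomp A' (ev A a `&` ev B b `&` ev C c)) //; last first.
  by apply: measurableI => //; apply: measurableI.
rewrite (decomp A' (ev A a `&` ev B b)) //; last by apply: measurableI.
rewrite (PfinE _ mb) (PfinE _ mbc) muleC [X in _ = X]muleC -!nneseriesZl //.
apply: eq_eseriesr => n _; rewrite FnE; case: pickle_inv => [x|].
  by rewrite -(PfinE _ mb) -(PfinE _ mbc) muleC [RHS]muleC; exact: H.
by rewrite !setI0 measure0 !mule0.
Qed.


Lemma marg_fst {TA TB TC : Type} {T : countType} (A : Omega -> TA) (A' : Omega -> T)
  (B : Omega -> TB) (C : Omega -> TC) :
  discrete_rv A -> discrete_rv A' -> discrete_rv B -> discrete_rv C ->
  markov_chain P (fun w => (A w, A' w)) B C -> markov_chain P A B C.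
Proof.
move=> dA dA' dB dC H; apply: (marg _ _ _ _ dA dA' dB dC) => a a' b c.
have := H (a, a') b c; rewrite !ev_pair.
have -> : ev A a `&` ev A' a' `&` ev B b `&` ev C c = ev A a `&` ev B b `&` ev C c `&` ev A' a' by setI_tac.
have -> : ev A a `&` ev A' a' `&` ev B b = ev A a `&` ev B b `&` ev A' a' by setI_tac.
by [].
Qed.

Lemma marg_snd {TA TB TC : Type} {T : countType} (A : Omega -> TA) (A' : Omega -> T)
  (B : Omega -> TB) (C : Omega -> TC) :
  discrete_rv A -> discrete_rv A' -> discrete_rv B -> discrete_rv C ->
  markov_chain P (fun w => (A' w, A w)) B C -> markov_chain P A B C.
Proof.
move=> dA dA' dB dC H; apply: (marg _ _ _ _ dA dA' dB dC) => a a' b c.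
have := H (a', a) b c; rewrite !ev_pair.
have -> : ev A' a' `&` ev A a `&` ev B b `&` ev C c = ev A a `&` ev B b `&` ev C c `&` ev A' a' by setI_tac.
have -> : ev A' a' `&` ev A a `&` ev B b = ev A a `&` ev B b `&` ev A' a' by setI_tac.
by [].
Qed.

Definition pr (E : set Omega) : R := fine (P E).

Lemma pr_ge0 E : 0 <= pr E.
Proof. by apply: fine_ge0. Qed.

Lemma pr_le E F : measurable E -> measurable F -> E `<=` F -> pr E <= pr F.
Proof.
move=> mE mF EF; rewrite /pr; apply: fine_le.
- exact: fin_num_measure.
- exact: fin_num_measure.
- by apply: le_measure => //; rewrite inE.
Qed.

Lemma markov_real {TA TB TC : Type} (A : Omega -> TA) (B : Omega -> TB) (C : Omega -> TC) :
  discrete_rv A -> discrete_rv B -> discrete_rv C -> markov_chain P A B C ->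
  forall a b c, pr (ev A a `&` ev B b `&` ev C c) * pr (ev B b) =
    pr (ev A a `&` ev B b) * pr (ev B b `&` ev C c).
Proof.
move=> dA dB dC H a b c; have := H a b c.
have m1 : measurable (ev A a `&` ev B b) by apply: measurableI.
have m2 : measurable (ev B b `&` ev C c) by apply: measurableI.
have m3 : measurable (ev A a `&` ev B b `&` ev C c) by apply: measurableI.
rewrite (PfinE _ (dB b)) (PfinE _ m1) (PfinE _ m2) (PfinE _ m3).
by rewrite -!EFinM => -[].
Qed.

Lemma mi_zero {TA TB : choiceType} (A : Omega -> TA) (B : Omega -> TB) :
  (forall a b, pr (ev A a `&` ev B b) = pr (ev A a) * pr (ev B b)) ->
  mutual_info P A B = 0%E.
Proof.
move=> H; rewrite /mutual_info esum1 // => -[a b] _; rewrite /mi_term /=.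
rewrite -/(pr _) -/(pr _) -/(pr _) H.
set q := pr (ev A a) * pr (ev B b).
have [->|q0] := eqVneq q 0; first by rewrite !mul0r subrr addr0.
by rewrite divff // ln1 mulr0 sub0r addNr.
Qed.

Section Core.
Variables (X Y Z : finType) (Xv : Omega -> X) (Yv : Omega -> Y) (Zv : Omega -> Z)
  (M : Omega -> transcript) (m : transcript).
Hypotheses (dX : discrete_rv Xv) (dY : discrete_rv Yv) (dZ : discrete_rv Zv)
  (dM : discrete_rv M).

Local Notation E x y z := (ev Xv x `&` ev Yv y `&` ev Zv z).

Lemma mE x y z : measurable (E x y z).
Proof. by apply: measurableI => //; apply: measurableI. Qed.

Definition chainU {TU : Type} (U : Omega -> TU) (f : X -> Y -> Z -> TU) :=
  forall x y z, pr (ev M m `&` E x y z) * pr (ev U (f x y z)) =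
    pr (ev M m `&` ev U (f x y z)) * pr (E x y z).
Definition subU {TU : Type} (U : Omega -> TU) (f : X -> Y -> Z -> TU) :=
  forall x y z, E x y z `<=` ev U (f x y z).

Lemma ratio_eq {T1 T2 : Type} (U1 : Omega -> T1) f1 (U2 : Omega -> T2) f2 :
  discrete_rv U1 -> discrete_rv U2 -> chainU U1 f1 -> chainU U2 f2 ->
  subU U1 f1 -> subU U2 f2 -> forall x y z, 0 < pr (E x y z) ->
  pr (ev M m `&` ev U1 (f1 x y z)) / pr (ev U1 (f1 x y z)) =
  pr (ev M m `&` ev U2 (f2 x y z)) / pr (ev U2 (f2 x y z)).
Proof.
move=> d1 d2 c1 c2 s1 s2 x y z e0.
have h1 := c1 x y z; have h2 := c2 x y z.
have p1 : pr (ev U1 (f1 x y z)) != 0.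
  by rewrite gt_eqF //; apply: (lt_le_trans e0); apply: pr_le; [exact: mE | exact: d1 | exact: s1].
have p2 : pr (ev U2 (f2 x y z)) != 0.
  by rewrite gt_eqF //; apply: (lt_le_trans e0); apply: pr_le; [exact: mE | exact: d2 | exact: s2].
move: h1 h2 p1 p2 e0.
set a := pr (_ `&` E x y z); set q1 := pr (ev U1 _); set q2 := pr (ev U2 _).
set b1 := pr (_ `&` ev U1 _); set b2 := pr (_ `&` ev U2 _); set e := pr (E x y z).
move=> h1 h2 p1 p2 e0.
apply/eqP; rewrite eqr_div //; apply/eqP.
apply: (mulIf (lt0r_neq0 e0)).
by rewrite mulrAC -h1 [RHS]mulrAC -h2 mulrAC.
Qed.

Lemma final {TU : countType} (U : Omega -> TU) f c :
  discrete_rv U -> chainU U f -> subU U f ->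
  (forall u, pr (ev M m `&` ev U u) = c * pr (ev U u)) ->
  forall x y z, pr (ev M m `&` E x y z) = pr (ev M m) * pr (E x y z).
Proof.
move=> dU ch sU hc.
have cE : pr (ev M m) = c.
  rewrite /pr (decomp U (ev M m)) //.
  transitivity (fine (c%:E * \sum_(n <oo) P (setT `&` Fn U n)))%E; last first.
    by rewrite -decomp // probability_setT mule1.
  congr fine; rewrite -nneseriesZl //.
  apply: eq_eseriesr => n _; rewrite FnE; case: pickle_inv => [u|]; last first.
    by rewrite !setI0 measure0 mule0.
  rewrite setTI (PfinE _ (dU u)) (PfinE (ev M m `&` ev U u)); last exact: measurableI.
  by rewrite -EFinM; have := hc u; rewrite /pr => ->.
move=> x y z.
have [p0|pp] := eqVneq (pr (ev U (f x y z))) 0.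
  have eE : pr (E x y z) = 0.
    apply/le_anti; rewrite pr_ge0 andbT -p0; apply: pr_le; [exact: mE | exact: dU | exact: sU].
  have : pr (ev M m `&` E x y z) = 0.
    apply/le_anti; rewrite pr_ge0 andbT -eE; apply: pr_le; [|exact: mE|by move=> w []].
    by apply: measurableI => //; exact: mE.
  by move=> ->; rewrite eE mulr0.
apply: (mulIf pp); rewrite ch hc cE mulrAC.
done.
Qed.

End Core.

End Helpers.


Section Main.
Context {R : realType} {X Y Z : finType} (pXY : X -> Y -> R) (pZ : X -> Y -> Z -> R).
Context {d : measure_display} {Omega : measurableType d} (P : probability Omega R)
  (Xv : Omega -> X) (Yv : Omega -> Y) (Zv : Omega -> Z).
Hypotheses (dX : discrete_rv Xv) (dY : discrete_rv Yv) (dZ : discrete_rv Zv).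
Hypothesis hcorr : forall x y z,
  P (ev Xv x `&` ev Yv y `&` ev Zv z) = (pXY x y * pZ x y z)%:E.
Hypothesis hc : is_cond_pmf pZ.

Local Notation E x y z := (ev Xv x `&` ev Yv y `&` ev Zv z).

Lemma discrete_pair {TA TB : Type} (A : Omega -> TA) (B : Omega -> TB) :
  discrete_rv A -> discrete_rv B -> discrete_rv (fun w => (A w, B w)).
Proof. by move=> dA dB [a b]; rewrite ev_pair; apply: measurableI. Qed.

Lemma posE x y z : 0 < pXY x y -> 0 < pZ x y z -> 0 < pr P (E x y z).
Proof. by move=> h1 h2; rewrite /pr hcorr /= mulr_gt0. Qed.

Lemma exists_z x y : exists z, 0 < pZ x y z.
Proof.
case: (hc x y) => h0 h1.
case: (pickP (fun z => 0 < pZ x y z)) => [z hz|H]; first by exists z.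
exfalso; have : \sum_(z : Z) pZ x y z = 0.
  by rewrite big1 // => z _; apply/eqP; rewrite eq_le h0 andbT leNgt H.
by rewrite h1 => /eqP; rewrite oner_eq0.
Qed.

Lemma finish (M : Omega -> transcript) :
  (forall mm x y z, pr P (ev M mm `&` E x y z) = pr P (ev M mm) * pr P (E x y z)) ->
  mutual_info P (fun w => (Xv w, Yv w, Zv w)) M = 0%E.
Proof.
move=> H; apply: mi_zero => -[[x y] z] mm.
rewrite (ev_pair (fun w => (Xv w, Yv w)) Zv) ev_pair setIC H mulrC.
done.
Qed.

Lemma from_ratio {TU : Type} (M : Omega -> transcript) m (U : Omega -> TU) c :
  discrete_rv M -> discrete_rv U ->
  (forall u, pr P (ev U u) != 0 -> pr P (ev M m `&` ev U u) / pr P (ev U u) = c) ->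
  forall u, pr P (ev M m `&` ev U u) = c * pr P (ev U u).
Proof.
move=> dM dU H u.
have [p0|pp] := eqVneq (pr P (ev U u)) 0.
  rewrite p0 mulr0; apply/le_anti; rewrite pr_ge0 andbT -p0.
  by apply: pr_le; [apply: measurableI | | move=> w []].
by rewrite -(H u pp) divfK.
Qed.

Lemma chainX (M : Omega -> transcript) m : discrete_rv M ->
  markov_chain P M Xv (fun w => (Yv w, Zv w)) ->
  chainU P X Y Z Xv Yv Zv M m Xv (fun x _ _ => x).
Proof.
move=> dM H x y z /=.
have := markov_real P _ _ _ dM dX (discrete_pair _ _ dY dZ) H m x (y, z); rewrite ev_pair.
have -> : ev M m `&` ev Xv x `&` (ev Yv y `&` ev Zv z) = ev M m `&` E x y z by setI_tac.
have -> : ev Xv x `&` (ev Yv y `&` ev Zv z) = E x y z by setI_tac.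
by [].
Qed.

Lemma chainY (M : Omega -> transcript) m : discrete_rv M ->
  markov_chain P M Yv (fun w => (Xv w, Zv w)) ->
  chainU P X Y Z Xv Yv Zv M m Yv (fun _ y _ => y).
Proof.
move=> dM H x y z /=.
have := markov_real P _ _ _ dM dY (discrete_pair _ _ dX dZ) H m y (x, z); rewrite ev_pair.
have -> : ev M m `&` ev Yv y `&` (ev Xv x `&` ev Zv z) = ev M m `&` E x y z by setI_tac.
have -> : ev Yv y `&` (ev Xv x `&` ev Zv z) = E x y z by setI_tac.
by [].
Qed.

Lemma chainZ (M : Omega -> transcript) m : discrete_rv M ->
  markov_chain P M Zv (fun w => (Xv w, Yv w)) ->
  chainU P X Y Z Xv Yv Zv M m Zv (fun _ _ z => z).
Proof.
move=> dM H x y z /=.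
have := markov_real P _ _ _ dM dZ (discrete_pair _ _ dX dY) H m z (x, y); rewrite ev_pair.
have -> : ev M m `&` ev Zv z `&` (ev Xv x `&` ev Yv y) = ev M m `&` E x y z by setI_tac.
have -> : ev Zv z `&` (ev Xv x `&` ev Yv y) = E x y z by setI_tac.
by [].
Qed.

Lemma subX : subU X Y Z Xv Yv Zv Xv (fun x _ _ => x).
Proof. by move=> x y z w [[]]. Qed.
Lemma subY : subU X Y Z Xv Yv Zv Yv (fun _ y _ => y).
Proof. by move=> x y z w [[]]. Qed.
Lemma subZ : subU X Y Z Xv Yv Zv Zv (fun _ _ z => z).
Proof. by move=> x y z w [[]]. Qed.

Lemma inhX : is_pmf2 pXY -> exists x0 : X, true.
Proof.
case=> _ hs; case: (pickP (@predT X)) => [x0 _|H0]; first by exists x0.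
exfalso; move: hs; rewrite big1 => [/eqP|i _]; first by rewrite eq_sym oner_eq0.
by have := H0 i.
Qed.

Lemma inhY : is_pmf2 pXY -> exists y0 : Y, true.
Proof.
case=> _ hs; case: (pickP (@predT Y)) => [y0 _|H0]; first by exists y0.
exfalso; move: hs; rewrite exchange_big big1 => [/eqP|i _]; first by rewrite eq_sym oner_eq0.
by have := H0 i.
Qed.

Lemma part1 (hpmf : is_pmf2 pXY) (hg : char_graph_connected pXY)
  (M : Omega -> transcript) (dM : discrete_rv M) :
  markov_chain P M Xv (fun w => (Yv w, Zv w)) ->
  markov_chain P M Yv (fun w => (Xv w, Zv w)) ->
  mutual_info P (fun w => (Xv w, Yv w, Zv w)) M = 0%E.
Proof.
move=> chX chY; apply: finish => m.
pose g := fun u : X + Y => match u with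
  | inl x => pr P (ev M m `&` ev Xv x) / pr P (ev Xv x)
  | inr y => pr P (ev M m `&` ev Yv y) / pr P (ev Yv y) end.
have edge : forall x y, 0 < pXY x y -> g (inl x) = g (inr y).
  move=> x y hxy; have [z hz] := exists_z x y; rewrite /g.
  exact: (ratio_eq P X Y Z Xv Yv Zv M m dX dY dZ Xv (fun x _ _ => x) Yv (fun _ y _ => y)
    dX dY (chainX M m dM chX) (chainY M m dM chY) subX subY x y z (posE x y z hxy hz)).
have [x0 _] := inhX hpmf.
have cl : fingraph.closed (char_graph pXY) [pred u | g u == g (inl x0)].
  move=> [u|u] [v|v] //= e; rewrite !inE /=.
    by have := edge u v e; rewrite /g /= => ->.
  by have := edge v u e; rewrite /g /= => ->.
have gc : forall x, g (inl x) = g (inl x0).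
  move=> x; have := closed_connect cl (hg (inl x0) (inl x)).
  by rewrite !inE /= eqxx => /esym/eqP.
apply: (final P X Y Z Xv Yv Zv M m dX dY dZ dM Xv (fun x _ _ => x) (g (inl x0)) dX
  (chainX M m dM chX) subX).
by apply: from_ratio => // u _; exact: (gc u).
Qed.

Lemma part2 (hpmf : is_pmf2 pXY) (hfs : full_support pXY) (hnp : ~ X_partition_exists pZ)
  (M : Omega -> transcript) (dM : discrete_rv M) :
  markov_chain P M Xv (fun w => (Yv w, Zv w)) ->
  markov_chain P M Zv (fun w => (Xv w, Yv w)) ->
  mutual_info P (fun w => (Xv w, Yv w, Zv w)) M = 0%E.
Proof.
move=> chX chZ; apply: finish => m.
pose g1 := fun x => pr P (ev M m `&` ev Xv x) / pr P (ev Xv x).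
pose g2 := fun z => pr P (ev M m `&` ev Zv z) / pr P (ev Zv z).
have edge : forall x y z, 0 < pZ x y z -> g1 x = g2 z.
  move=> x y z hz; rewrite /g1 /g2.
  exact: (ratio_eq P X Y Z Xv Yv Zv M m dX dY dZ Xv (fun x _ _ => x) Zv (fun _ _ z => z)
    dX dZ (chainX M m dM chX) (chainZ M m dM chZ) subX subZ x y z (posE x y z (hfs x y) hz)).
have [x0 _] := inhX hpmf.
have gc : forall x, g1 x = g1 x0.
  move=> x; have [//|ne] := eqVneq (g1 x) (g1 x0); exfalso; apply: hnp.
  exists [set x | g1 x == g1 x0]%SET, [set x | g1 x != g1 x0]%SET; split.
  - by apply/setP => u; rewrite !inE orbN.
  - by rewrite disjoint_subset; apply/fintype.subsetP => u; rewrite !inE negbK.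
  - by apply/set0Pn; exists x0; rewrite inE eqxx.
  - by apply/set0Pn; exists x; rewrite inE ne.
  - rewrite disjoint_subset; apply/fintype.subsetP => z; rewrite !inE => H1; apply/negP => H2.
    move: H1 H2 => /existsP [x1 /andP [hx1 /existsP [y1 h1]]] /existsP [x2 /andP [hx2 /existsP [y2 h2]]].
    move: hx1; rewrite inE => hx1.
    have e12 : g1 x1 = g1 x2 by rewrite (edge _ _ _ h1) (edge _ _ _ h2).
    by move: hx2; rewrite inE -e12 hx1.
apply: (final P X Y Z Xv Yv Zv M m dX dY dZ dM Xv (fun x _ _ => x) (g1 x0) dX
  (chainX M m dM chX) subX).
by apply: from_ratio => // u _; exact: (gc u).
Qed.

Lemma part3 (hpmf : is_pmf2 pXY) (hfs : full_support pXY) (hnp : ~ Y_partition_exists pZ)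
  (M : Omega -> transcript) (dM : discrete_rv M) :
  markov_chain P M Yv (fun w => (Xv w, Zv w)) ->
  markov_chain P M Zv (fun w => (Xv w, Yv w)) ->
  mutual_info P (fun w => (Xv w, Yv w, Zv w)) M = 0%E.
Proof.
move=> chY chZ; apply: finish => m.
pose g1 := fun y => pr P (ev M m `&` ev Yv y) / pr P (ev Yv y).
pose g2 := fun z => pr P (ev M m `&` ev Zv z) / pr P (ev Zv z).
have edge : forall x y z, 0 < pZ x y z -> g1 y = g2 z.
  move=> x y z hz; rewrite /g1 /g2.
  exact: (ratio_eq P X Y Z Xv Yv Zv M m dX dY dZ Yv (fun _ y _ => y) Zv (fun _ _ z => z)
    dY dZ (chainY M m dM chY) (chainZ M m dM chZ) subY subZ x y z (posE x y z (hfs x y) hz)).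
have [y0 _] := inhY hpmf.
have gc : forall y, g1 y = g1 y0.
  move=> y; have [//|ne] := eqVneq (g1 y) (g1 y0); exfalso; apply: hnp.
  exists [set y | g1 y == g1 y0]%SET, [set y | g1 y != g1 y0]%SET; split.
  - by apply/setP => u; rewrite !inE orbN.
  - by rewrite disjoint_subset; apply/fintype.subsetP => u; rewrite !inE negbK.
  - by apply/set0Pn; exists y0; rewrite inE eqxx.
  - by apply/set0Pn; exists y; rewrite inE ne.
  - rewrite disjoint_subset; apply/fintype.subsetP => z; rewrite !inE => H1; apply/negP => H2.
    move: H1 H2 => /existsP [x1 /existsP [y1 /andP [hy1 h1]]] /existsP [x2 /existsP [y2 /andP [hy2 h2]]].
    move: hy1; rewrite inE => hy1.
    have e12 : g1 y1 = g1 y2 by rewrite (edge _ _ _ h1) (edge _ _ _ h2).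
    by move: hy2; rewrite inE -e12 hy1.
apply: (final P X Y Z Xv Yv Zv M m dX dY dZ dM Yv (fun _ y _ => y) (g1 y0) dY
  (chainY M m dM chY) subY).
by apply: from_ratio => // u _; exact: (gc u).
Qed.

End Main.



Theorem lemma3 (R : realType) (X Y Z : finType)
  (pXY : X -> Y -> R) (pZ : X -> Y -> Z -> R) :
  is_pmf2 pXY -> is_cond_pmf pZ ->
  [/\
   (char_graph_connected pXY ->
    forall (d : measure_display) (Omega : measurableType d) (P : probability Omega R)
      (Xv : Omega -> X) (Yv : Omega -> Y) (Zv : Omega -> Z)
      (M12 M23 M31 : Omega -> transcript),
      secure_execution P pXY pZ Xv Yv Zv M12 M23 M31 ->
      mutual_info P (fun w => (Xv w, Yv w, Zv w)) M12 = 0%E),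
   (full_support pXY -> ~ X_partition_exists pZ ->
    forall (d : measure_display) (Omega : measurableType d) (P : probability Omega R)
      (Xv : Omega -> X) (Yv : Omega -> Y) (Zv : Omega -> Z)
      (M12 M23 M31 : Omega -> transcript),
      secure_execution P pXY pZ Xv Yv Zv M12 M23 M31 ->
      mutual_info P (fun w => (Xv w, Yv w, Zv w)) M31 = 0%E) &
   (full_support pXY -> ~ Y_partition_exists pZ ->
    forall (d : measure_display) (Omega : measurableType d) (P : probability Omega R)
      (Xv : Omega -> X) (Yv : Omega -> Y) (Zv : Omega -> Z)
      (M12 M23 M31 : Omega -> transcript),
      secure_execution P pXY pZ Xv Yv Zv M12 M23 M31 ->
      mutual_info P (fun w => (Xv w, Yv w, Zv w)) M23 = 0%E)].
Proof.
move=> hpmf hc; split.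
- move=> hg d Omega P Xv Yv Zv M12 M23 M31
    [[dX dY dZ] [d12 d23 d31] _ hcorr [c1 c2 c3]].
  apply: (part1 pXY pZ P Xv Yv Zv dX dY dZ hcorr hc hpmf hg M12 d12).
  + exact: (marg_fst P M12 M31 Xv _ d12 d31 dX (discrete_pair _ _ dY dZ) c1).
  + exact: (marg_fst P M12 M23 Yv _ d12 d23 dY (discrete_pair _ _ dX dZ) c2).
- move=> hfs hnp d Omega P Xv Yv Zv M12 M23 M31
    [[dX dY dZ] [d12 d23 d31] _ hcorr [c1 c2 c3]].
  apply: (part2 pXY pZ P Xv Yv Zv dX dY dZ hcorr hpmf hfs hnp M31 d31).
  + exact: (marg_snd P M31 M12 Xv _ d31 d12 dX (discrete_pair _ _ dY dZ) c1).
  + exact: (marg_snd P M31 M23 Zv _ d31 d23 dZ (discrete_pair _ _ dX dY) c3).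
- move=> hfs hnp d Omega P Xv Yv Zv M12 M23 M31
    [[dX dY dZ] [d12 d23 d31] _ hcorr [c1 c2 c3]].
  apply: (part3 pXY pZ P Xv Yv Zv dX dY dZ hcorr hpmf hfs hnp M23 d23).
  + exact: (marg_snd P M23 M12 Yv _ d23 d12 dY (discrete_pair _ _ dX dZ) c2).
  + exact: (marg_fst P M23 M31 Zv _ d23 d31 dZ (discrete_pair _ _ dX dY) c3).
Qed.
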